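(* Let $n\ge 2$ and let $D$ be an $n\times n$ unit spherical Euclidean distance matrix (EDM) of embedding dimension $r$ such that every off-diagonal entry of $D$ is $\ge 2$. Define $\Delta$ by $D = 2(E-I)+2\Delta$ and let $w\in\mathbb{R}^n$ satisfy $Dw=e$. If $\Delta$ is irreducible, then $r=n-1$ (i.e., $D$ is the EDM of a simplex) and $w>\mathbf{0}$ (every entry of $w$ is positive).
   Context: $e$ denotes the all-ones vector in $\mathbb{R}^n$, $E$ the $n\times n$ all-ones matrix, $I$ the identity matrix. An $n\times n$ matrix $D=(d_{ij})$ is a Euclidean distance matrix (EDM) if there exist points $p^1,\dots,p^n$ in some Euclidean space with $d_{ij}=\|p^i-p^j\|^2$; the dimension of the affine span of these points is the embedding dimension of $D$; $D$ is the EDM of a simplex if its embedding dimension is $n-1$. $D$ is a unit spherical EDM if such points can be chosen on a sphere of radius $1$. A nonnegative $n\times n$ matrix $A$ is reducible if $A$ is the $1\times 1$ zero matrix, or $n\ge 2$ and there is a permutation matrix $Q$ with $QAQ^T=\begin{pmatrix}A_{11}&A_{12}\\ \mathbf{0}&A_{22}\end{pmatrix}$ with $A_{11},A_{22}$ square; otherwise $A$ is irreducible. *)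

(* Defs.v *)
From HB Require Import structures.
From mathcomp Require Import all_boot all_order all_algebra all_fingroup.
From mathcomp Require Import reals.
Set Implicit Arguments. Unset Strict Implicit. Unset Printing Implicit Defensive.
Import Order.TTheory GRing.Theory Num.Theory.
Local Open Scope ring_scope.

Section EDM.
Variable R : realType.

Definition sqdist (k : nat) (x y : 'rV[R]_k) : R :=
  \sum_(l < k) (x ord0 l - y ord0 l) ^+ 2.

Definition realizes (n k : nat) (D : 'M[R]_n) (p : 'I_n -> 'rV[R]_k) : Prop :=
  forall i j, D i j = sqdist (p i) (p j).

Definition is_EDM (n : nat) (D : 'M[R]_n) : Prop :=
  exists k (p : 'I_n -> 'rV[R]_k), realizes D p.

(* dimension of the affine span of p_1..p_n: rank of the points
   translated by their centroid *)
Definition centroid (n k : nat) (p : 'I_n -> 'rV[R]_k) : 'rV[R]_k :=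
  (n%:R)^-1 *: \sum_(i < n) p i.

Definition affdim (n k : nat) (p : 'I_n -> 'rV[R]_k) : nat :=
  \rank (\matrix_(i < n) (p i - centroid p)).

Definition embdim_is (n : nat) (D : 'M[R]_n) (r : nat) : Prop :=
  exists k (p : 'I_n -> 'rV[R]_k), realizes D p /\ affdim p = r.

Definition unit_spherical_EDM (n : nat) (D : 'M[R]_n) : Prop :=
  exists k (p : 'I_n -> 'rV[R]_k) (c : 'rV[R]_k),
    realizes D p /\ forall i, sqdist (p i) c = 1.

Definition reducible (n : nat) (A : 'M[R]_n) : Prop :=
  (n = 1%N /\ A = 0) \/
  ((2 <= n)%N /\ exists (s : 'S_n) (k : nat), (0 < k < n)%N /\
     forall a b : 'I_n, (k <= a)%N -> (b < k)%N ->
       (perm_mx s *m A *m (perm_mx s)^T) a b = 0).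

Definition irreducible (n : nat) (A : 'M[R]_n) : Prop := ~ reducible A.

End EDM.

(* Main.v *)
Require Import Defs.
From HB Require Import structures.
From mathcomp Require Import all_boot all_order all_algebra all_fingroup.
From mathcomp Require Import reals.
From mathcomp Require Import ring lra zify.
Import Order.TTheory GRing.Theory Num.Theory.
Local Open Scope ring_scope.
Set Implicit Arguments. Unset Strict Implicit.

Definition dotv (R : realType) (k : nat) (x y : 'rV[R]_k) : R :=
  \sum_(l < k) x ord0 l * y ord0 l.

Definition comb (R : realType) (k n : nat) (u : 'I_n -> 'rV[R]_k) (a : 'I_n -> R) :=
  \sum_(i < n) a i *: u i.

Definition posp (R : realType) (n : nat) (a : 'I_n -> R) :=
  fun i => if 0 <= a i then a i else 0.
Definition negp (R : realType) (n : nat) (a : 'I_n -> R) :=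
  fun i => if 0 <= a i then 0 else - a i.

Lemma dotvC (R : realType) k (x y : 'rV[R]_k) : dotv x y = dotv y x.
Proof. by apply: eq_bigr => l _; rewrite mulrC. Qed.

Lemma dotv_ge0 (R : realType) k (x : 'rV[R]_k) : 0 <= dotv x x.
Proof. by apply: sumr_ge0 => l _; rewrite -expr2 sqr_ge0. Qed.

Lemma dotv_eq0 (R : realType) k (x : 'rV[R]_k) : dotv x x = 0 -> x = 0.
Proof.
move=> H; apply/rowP => l; rewrite mxE.
have H1 : forall i : 'I_k, true -> 0 <= x ord0 i * x ord0 i.
  by move=> i _; rewrite -expr2 sqr_ge0.
have /eqP := @psumr_eq0P _ _ _ _ H1 H l isT.
by rewrite mulf_eq0 orbb => /eqP; have -> : (0 : 'I_1) = ord0 by apply: val_inj.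
Qed.

Lemma dotv0r (R : realType) k (x : 'rV[R]_k) : dotv x 0 = 0.
Proof. by rewrite /dotv big1 // => l _; rewrite mxE mulr0. Qed.

Lemma dotv_sumL (R : realType) k n (a : 'I_n -> R) (u : 'I_n -> 'rV[R]_k) y :
  dotv (\sum_(i < n) a i *: u i) y = \sum_(i < n) a i * dotv (u i) y.
Proof.
rewrite /dotv.
under eq_bigr => l _ do rewrite summxE mulr_suml.
rewrite exchange_big /=; apply: eq_bigr => i _.
by rewrite mulr_sumr; apply: eq_bigr => l _; rewrite mxE mulrA.
Qed.

Lemma dotv_sumR (R : realType) k n (a : 'I_n -> R) (u : 'I_n -> 'rV[R]_k) y :
  dotv y (\sum_(i < n) a i *: u i) = \sum_(i < n) a i * dotv y (u i).
Proof.
rewrite dotvC dotv_sumL; by apply: eq_bigr => i _; rewrite dotvC.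
Qed.

Lemma dotv_sub (R : realType) k (x y : 'rV[R]_k) :
  dotv (x - y) (x - y) = dotv x x + dotv y y - 2 * dotv x y.
Proof.
rewrite /dotv.
have -> : \sum_(l < k) (x - y) ord0 l * (x - y) ord0 l =
   \sum_(l < k) (x ord0 l * x ord0 l + y ord0 l * y ord0 l - 2 * (x ord0 l * y ord0 l)).
  by apply: eq_bigr => l _; rewrite !mxE; ring.
by rewrite sumrB big_split /= mulr_sumr.
Qed.

Lemma dotvBr (R : realType) k (x y z : 'rV[R]_k) :
  dotv x (y - z) = dotv x y - dotv x z.
Proof. by rewrite /dotv -sumrB; apply: eq_bigr => l _; rewrite !mxE; ring. Qed.

Lemma dotvZr (R : realType) k (x y : 'rV[R]_k) a :
  dotv x (a *: y) = a * dotv x y.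
Proof. by rewrite /dotv mulr_sumr; apply: eq_bigr => l _; rewrite !mxE; ring. Qed.

Lemma sqdist_dot (R : realType) k (x y : 'rV[R]_k) : sqdist x y = dotv (x - y) (x - y).
Proof. by apply: eq_bigr => l _; rewrite !mxE expr2. Qed.

Lemma posp_ge0 (R : realType) n (a : 'I_n -> R) i : 0 <= posp a i.
Proof. by rewrite /posp; case: ifP. Qed.

Lemma negp_ge0 (R : realType) n (a : 'I_n -> R) i : 0 <= negp a i.
Proof. rewrite /negp; case: ifP => // /negbT; rewrite -ltNge oppr_ge0; exact: ltW. Qed.

Lemma posp_negp (R : realType) n (a : 'I_n -> R) i : posp a i * negp a i = 0.
Proof. by rewrite /posp /negp; case: ifP => _; rewrite ?mulr0 ?mul0r. Qed.

Lemma comb_split (R : realType) k n (u : 'I_n -> 'rV[R]_k) a :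
  comb u a = comb u (posp a) - comb u (negp a).
Proof.
rewrite /comb -sumrB; apply: eq_bigr => i _; rewrite -scalerBl; congr (_ *: _).
by rewrite /posp /negp; case: ifP => _; rewrite ?subr0 ?sub0r ?opprK.
Qed.

Lemma cross_le0 (R : realType) k n (u : 'I_n -> 'rV[R]_k) (a b : 'I_n -> R) :
  (forall i j, i != j -> dotv (u i) (u j) <= 0) ->
  (forall i, 0 <= a i) -> (forall i, 0 <= b i) -> (forall i, a i * b i = 0) ->
  dotv (comb u a) (comb u b) <= 0.
Proof.
move=> Hob Ha Hb Hab; rewrite /comb dotv_sumL; apply: sumr_le0 => i _.
rewrite dotv_sumR mulr_sumr; apply: sumr_le0 => j _.
have [<-|ij] := eqVneq i j; first by rewrite mulrA Hab mul0r.
by rewrite mulrA; apply: mulr_ge0_le0; [exact: mulr_ge0 | exact: Hob].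
Qed.

Lemma split0 (R : realType) k n (u : 'I_n -> 'rV[R]_k) (a : 'I_n -> R) :
  (forall i j, i != j -> dotv (u i) (u j) <= 0) ->
  comb u a = 0 -> comb u (posp a) = 0 /\ comb u (negp a) = 0.
Proof.
move=> Hob H0.
have E : comb u (posp a) = comb u (negp a).
  by apply/eqP; rewrite -subr_eq0 -comb_split H0.
have : dotv (comb u (posp a)) (comb u (posp a)) = 0.
  apply/le_anti; rewrite dotv_ge0 andbT; rewrite {2}E.
  apply: cross_le0 => //; [exact: posp_ge0 | exact: negp_ge0 | exact: posp_negp].
by move/dotv_eq0 => P0; split=> //; rewrite -E.
Qed.

Lemma support (R : realType) k n (u : 'I_n -> 'rV[R]_k) (b : 'I_n -> R) :
  (forall S : {set 'I_n}, S != set0 -> S != setT ->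
     (forall x y, x \notin S -> y \in S -> dotv (u x) (u y) = 0) -> False) ->
  (forall i j, i != j -> dotv (u i) (u j) <= 0) ->
  (forall i, 0 <= b i) -> comb u b = 0 ->
  (forall i, b i = 0) \/ (forall i, 0 < b i).
Proof.
move=> Hred Hob Hb H0.
pose S := [set i | 0 < b i].
have [S0|S0] := eqVneq S set0.
  left => i; have : i \notin S by rewrite S0 in_set0.
  by rewrite inE -leNgt => h; apply/le_anti; rewrite h Hb.
have [ST|ST] := eqVneq S setT.
  right => i; have : i \in S by rewrite ST in_setT.
  by rewrite inE.
exfalso; apply: (Hred S S0 ST) => x y; rewrite !inE -leNgt => hx hy.
have bx : b x = 0 by apply/le_anti; rewrite hx Hb.
have E : dotv (u x) (comb u b) = 0 by rewrite H0 dotv0r.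
rewrite /comb dotv_sumR in E.
have H1 : forall j : 'I_n, true -> 0 <= - (b j * dotv (u x) (u j)).
  move=> j _; have [<-|jx] := eqVneq x j; first by rewrite bx mul0r oppr0.
  by rewrite oppr_ge0; apply: mulr_ge0_le0; [exact: Hb | exact: Hob].
have E2 : \sum_(j < n) - (b j * dotv (u x) (u j)) = 0 by rewrite sumrN E oppr0.
have /eqP := @psumr_eq0P _ _ _ _ H1 E2 y isT.
rewrite oppr_eq0 mulf_eq0 => /orP [/eqP h|/eqP //].
by move: hy; rewrite h ltxx.
Qed.

Lemma minprin (R : realType) k n (u : 'I_n -> 'rV[R]_k) (z : 'I_n -> R) :
  (forall i, dotv (u i) (u i) = 1) ->
  (forall i j, i != j -> dotv (u i) (u j) <= 0) ->
  (forall i, dotv (u i) (comb u z) = 1) -> forall i, 1 <= z i.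
Proof.
move=> Hu1 Hob Hz.
have Hs : \sum_(i < n) negp z i * dotv (u i) (comb u z) = \sum_(i < n) negp z i.
  by apply: eq_bigr => i _; rewrite Hz mulr1.
rewrite -dotv_sumL -/(comb u (negp z)) (comb_split u z) dotvBr in Hs.
have Hc : dotv (comb u (negp z)) (comb u (posp z)) <= 0.
  apply: cross_le0 => //; [exact: negp_ge0 | exact: posp_ge0 | ].
  by move=> i; rewrite mulrC posp_negp.
have Hn := dotv_ge0 (comb u (negp z)).
have Hsum : \sum_(i < n) negp z i = 0.
  apply/le_anti; rewrite sumr_ge0 ?andbT //; last by move=> i _; exact: negp_ge0.
  rewrite -Hs; lra.
have H1 : forall j : 'I_n, true -> 0 <= negp z j by move=> j _; exact: negp_ge0.
have zpos : forall i, 0 <= z i.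
  move=> i; have := @psumr_eq0P _ _ _ _ H1 Hsum i isT.
  rewrite /negp; case: (boolP (0 <= z i)) => // nz /eqP.
  by rewrite oppr_eq0 => /eqP h; rewrite h lexx in nz.
move=> i; have := Hz i; rewrite /comb dotv_sumR (bigD1 i) //= Hu1 mulr1.
have : \sum_(j < n | j != i) z j * dotv (u i) (u j) <= 0.
  apply: sumr_le0 => j ji; apply: mulr_ge0_le0; first exact: zpos.
  by apply: Hob; rewrite eq_sym.
lra.
Qed.

Lemma perm_reducible (R : realType) n (A : 'M[R]_n) (S : {set 'I_n}) :
  (2 <= n)%N -> S != set0 -> S != setT ->
  (forall x y, x \notin S -> y \in S -> A x y = 0) -> reducible A.
Proof.
move=> n2 S0 ST HA; right; split => //.
pose s := enum S ++ enum (~: S).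
have cS := cardsC S; rewrite card_ord in cS.
have ss : size s = n by rewrite size_cat -!cardE.
have us : uniq s.
  rewrite cat_uniq !enum_uniq /= andbT; apply/hasPn => x.
  by rewrite !mem_enum inE.
pose f (i : 'I_n) := nth i s i.
have fE i j : f i = nth j s i by rewrite /f (set_nth_default j) // ss.
have finj : injective f.
  move=> i j; rewrite (fE i i) (fE j i) => /eqP.
  by rewrite nth_uniq ?ss // => /eqP/val_inj.
exists (perm finj), #|S|; split.
  apply/andP; split; first by rewrite card_gt0.
  by rewrite -[X in (_ < X)%N]card_ord -cardsT; apply: proper_card; rewrite properT.
move=> a b ha hb.
rewrite tr_perm_mx -row_permE -col_permE !mxE !permE.
apply: HA.
  rewrite /f nth_cat -cardE ltnNge ha /=.
  have : (a - #|S| < size (enum (~: S)))%N.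
    rewrite -cardE; have := ltn_ord a; lia.
  by move/(mem_nth a); rewrite mem_enum inE.
rewrite (fE b b) /s nth_cat -cardE hb.
have : (b < size (enum S))%N by rewrite -cardE.
by move/(mem_nth b); rewrite mem_enum.
Qed.

Lemma sum_sqdist (R : realType) n k (x : 'I_n -> 'rV[R]_k) (b : 'I_n -> R) :
  \sum_(i < n) b i = 0 ->
  \sum_(i < n) \sum_(j < n) b i * b j * sqdist (x i) (x j)
   = - 2 * dotv (\sum_(i < n) b i *: x i) (\sum_(i < n) b i *: x i).
Proof.
move=> Hb.
pose K := \sum_(j < n) b j * dotv (x j) (x j).
have E1 : forall i, \sum_(j < n) b i * b j * sqdist (x i) (x j)
   = b i * K - 2 * (b i * dotv (x i) (\sum_(j < n) b j *: x j)).
  move=> i.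
  have -> : b i * K - 2 * (b i * dotv (x i) (\sum_(j < n) b j *: x j)) =
      \sum_(j < n) (b i * (b j * dotv (x j) (x j)) - 2 * (b i * (b j * dotv (x i) (x j)))).
    by rewrite /K dotv_sumR !mulr_sumr -sumrB.
  have -> : \sum_(j < n) b i * b j * sqdist (x i) (x j) =
     \sum_(j < n) b i * b j * dotv (x i) (x i) +
     \sum_(j < n) (b i * (b j * dotv (x j) (x j)) - 2 * (b i * (b j * dotv (x i) (x j)))).
    by rewrite -big_split; apply: eq_bigr => j _ /=; rewrite sqdist_dot dotv_sub; ring.
  by rewrite -mulr_suml -mulr_sumr Hb mulr0 mul0r add0r.
rewrite (eq_bigr _ (fun i _ => E1 i)) sumrB -mulr_suml Hb mul0r sub0r.
by rewrite -mulr_sumr -dotv_sumL mulNr.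
Qed.

Lemma pospnegpE (R : realType) n (a : 'I_n -> R) i : a i = posp a i - negp a i.
Proof. by rewrite /posp /negp; case: ifP => _; rewrite ?subr0 ?sub0r ?opprK. Qed.

Lemma sum_gt0 (R : realType) n (c : 'I_n -> R) :
  (0 < n)%N -> (forall i, 0 < c i) -> 0 < \sum_(i < n) c i.
Proof.
move=> n0 Hc; rewrite (bigD1 (Ordinal n0)) //=.
have : 0 <= \sum_(i < n | i != Ordinal n0) c i.
  by apply: sumr_ge0 => i _; apply: ltW.
have := Hc (Ordinal n0); lra.
Qed.

Lemma kernel0 (R : realType) k n (u : 'I_n -> 'rV[R]_k) (b : 'I_n -> R) :
  (0 < n)%N ->
  (forall S : {set 'I_n}, S != set0 -> S != setT ->
     (forall x y, x \notin S -> y \in S -> dotv (u x) (u y) = 0) -> False) ->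
  (forall i j, i != j -> dotv (u i) (u j) <= 0) ->
  \sum_(i < n) b i = 0 -> comb u b = 0 -> forall i, b i = 0.
Proof.
move=> n0 Hred Hob Hs H0.
have [Hp Hn] := split0 Hob H0.
have Es : \sum_(i < n) b i = \sum_(i < n) posp b i - \sum_(i < n) negp b i.
  by rewrite -sumrB; apply: eq_bigr => i _; rewrite -pospnegpE.
have [P0|P1] := support Hred Hob (posp_ge0 b) Hp;
have [N0|N1] := support Hred Hob (negp_ge0 b) Hn.
- by move=> i; rewrite pospnegpE P0 N0 subrr.
- have Z : \sum_(i < n) posp b i = 0 by apply: big1 => i _; exact: P0.
  have := sum_gt0 n0 N1; rewrite Hs Z in Es; lra.
- have Z : \sum_(i < n) negp b i = 0 by apply: big1 => i _; exact: N0.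
  have := sum_gt0 n0 P1; rewrite Hs Z in Es; lra.
- have := posp_negp b (Ordinal n0); have := P1 (Ordinal n0); have := N1 (Ordinal n0).
  move=> h1 h2; have := mulr_gt0 h2 h1; lra.
Qed.

Lemma rank_lemma (R : realType) n k (q : 'I_n -> 'rV[R]_k) :
  (0 < n)%N ->
  (forall b : 'I_n -> R, \sum_(i < n) b i = 0 -> \sum_(i < n) b i *: q i = 0 ->
     forall i, b i = 0) ->
  affdim q = n.-1.
Proof.
move=> n0 Hinj; rewrite /affdim.
set M := \matrix_(i < n) (q i - centroid q).
pose e : 'rV[R]_n := const_mx 1.
have nz : (n%:R : R) != 0 by rewrite pnatr_eq0 -lt0n.
have HM : forall v : 'rV[R]_n,
    v *m M = \sum_(i < n) v ord0 i *: q i - (\sum_(i < n) v ord0 i) *: centroid q.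
  move=> v; rewrite mulmx_sum_row scaler_suml -sumrB.
  by apply: eq_bigr => i _; rewrite rowK scalerBr.
have HkerE : forall v : 'rV[R]_n, v *m M = 0 -> (v <= e)%MS.
  move=> v Hv; pose m := (\sum_(i < n) v ord0 i) * (n%:R)^-1.
  have H1 : \sum_(i < n) (v ord0 i - m) = 0.
    rewrite sumrB sumr_const card_ord -mulr_natr /m.
    by rewrite -mulrA mulVf // mulr1 subrr.
  have H2 : \sum_(i < n) (v ord0 i - m) *: q i = 0.
    rewrite HM /centroid scalerA in Hv.
    rewrite (eq_bigr (fun i => v ord0 i *: q i - m *: q i)); last first.
      by move=> i _; rewrite scalerBl.
    by rewrite sumrB -scaler_sumr.
  have Hb := Hinj _ H1 H2.
  have -> : v = m *: e.
    apply/rowP => i; rewrite !mxE mulr1.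
    have := Hb i; have -> : (0 : 'I_1) = ord0 by apply: val_inj.
    lra.
  exact: scalemx_sub (submx_refl e).
have Hker : (kermx M <= e)%MS.
  by apply/row_subP => i; apply: HkerE; rewrite -row_mul mulmx_ker row0.
have He : (e <= kermx M)%MS.
  apply/sub_kermxP; rewrite HM.
  have -> : \sum_(i < n) e ord0 i = n%:R by rewrite (eq_bigr (fun _ => 1)) ?sumr_const ?card_ord // => i _; rewrite mxE.
  rewrite /centroid scalerA mulfV // scale1r.
  by apply/eqP; rewrite subr_eq0; apply/eqP; apply: eq_bigr => i _; rewrite mxE scale1r.
have e0 : e != 0.
  apply/eqP => /rowP /(_ (Ordinal n0)); rewrite !mxE => /eqP; by rewrite oner_eq0.
have rk : \rank (kermx M) = 1%N.
  apply/eqP; rewrite eqn_leq; apply/andP; split.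
    by apply: leq_trans (mxrankS Hker) _; rewrite rank_rV e0.
  by apply: leq_trans (mxrankS He); rewrite rank_rV e0.
rewrite mxrank_ker in rk.
have := rank_leq_row M; lia.
Qed.

Unset Implicit Arguments. Set Strict Implicit.

Theorem lemma4p3 (R : realType) (n : nat) (hn : (2 <= n)%N)
  (D : 'M[R]_n) (r : nat)
  (hD : unit_spherical_EDM D) (hr : embdim_is D r)
  (hoff : forall i j : 'I_n, i != j -> 2 <= D i j)
  (Delta : 'M[R]_n)
  (hDelta : D = 2%:R *: (const_mx 1 - 1%:M) + 2%:R *: Delta)
  (w : 'cV[R]_n) (hw : D *m w = const_mx 1) :
  irreducible Delta -> r = n.-1 /\ (forall i : 'I_n, 0 < w i ord0).
Proof.
move=> hirr.
have n0 : (0 < n)%N by lia.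
case: hD => k [p [c [Hp Hc]]].
pose u := fun i => p i - c.
have Hu1 : forall i, dotv (u i) (u i) = 1 by move=> i; rewrite -sqdist_dot Hc.
have HD : forall i j, D i j = 2 - 2 * dotv (u i) (u j).
  move=> i j; rewrite Hp sqdist_dot.
  have -> : p i - p j = u i - u j by rewrite /u opprB addrA subrK.
  by rewrite dotv_sub !Hu1.
have Hob : forall i j, i != j -> dotv (u i) (u j) <= 0.
  by move=> i j ij; have := hoff i j ij; rewrite HD; lra.
have HDel : forall i j, i != j -> Delta i j = - dotv (u i) (u j).
  move=> i j ij; have := congr1 (fun M : 'M[R]_n => M i j) hDelta.
  rewrite /= !mxE (negbTE ij) ?mulr0n HD; lra.
have Hred : forall S : {set 'I_n}, S != set0 -> S != setT ->
    (forall x y, x \notin S -> y \in S -> dotv (u x) (u y) = 0) -> False.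
  move=> S S0 ST HS; apply: hirr; apply: (perm_reducible hn S0 ST) => x y hx hy.
  have xy : x != y by apply/eqP => E; move: hx; rewrite E hy.
  by rewrite HDel // HS // oppr0.
split.
  case: hr => k' [q [Hq <-]]; apply: (rank_lemma n0) => b Hb Hbq.
  apply: (kernel0 n0 Hred Hob Hb).
  have E := sum_sqdist q Hb; have E' := sum_sqdist p Hb.
  have EE : \sum_(i < n) \sum_(j < n) b i * b j * sqdist (q i) (q j)
      = \sum_(i < n) \sum_(j < n) b i * b j * sqdist (p i) (p j).
    by apply: eq_bigr => i _; apply: eq_bigr => j _; rewrite -Hp -Hq.
  rewrite E E' Hbq dotv0r mulr0 in EE.
  have Hbp : \sum_(i < n) b i *: p i = 0.
    apply: dotv_eq0; move/eqP: EE; rewrite eq_sym mulf_eq0 => /orP [|/eqP //].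
    by rewrite oppr_eq0 pnatr_eq0.
  rewrite /comb /u (eq_bigr (fun i => b i *: p i - b i *: c)); last first.
    by move=> i _; rewrite scalerBr.
  by rewrite sumrB -scaler_suml Hb scale0r Hbp subr0.
pose wf := fun i => w i ord0.
pose s := \sum_(i < n) wf i.
pose X := comb u wf.
have Hrow : forall i, 2 * dotv (u i) X = 2 * s - 1.
  move=> i; have := congr1 (fun M : 'cV[R]_n => M i ord0) hw; rewrite /= !mxE.
  have -> : \sum_(j < n) D i j * w j ord0 = 2 * s - 2 * dotv (u i) X.
    rewrite /X /comb dotv_sumR /s !mulr_sumr -sumrB; apply: eq_bigr => j _.
    rewrite HD /wf; ring.
  lra.
have [m0|mn0] := eqVneq (2 * s - 1) 0.
  have HX0 : forall i, dotv (u i) X = 0 by move=> i; have := Hrow i; lra.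
  have X0 : X = 0.
    apply: dotv_eq0; rewrite {1}/X /comb dotv_sumL big1 // => i _.
    by rewrite HX0 mulr0.
  have [Hp0 Hn0] := split0 Hob X0.
  have [N0|N1] := support Hred Hob (negp_ge0 wf) Hn0; last first.
    have Hneg : forall i, 0 < - wf i.
      move=> i; rewrite pospnegpE; have := posp_negp wf i; have := N1 i.
      move=> h1 h2; have : posp wf i = 0.
        by move/eqP: h2; rewrite mulf_eq0 => /orP [/eqP //| /eqP h]; move: h1; rewrite h ltxx.
      move=> ->; lra.
    have := sum_gt0 (c := fun i => - wf i) n0 Hneg; rewrite sumrN.
    rewrite -/s; lra.
  have [P0|P1] := support Hred Hob (posp_ge0 wf) Hp0.
    have : s = 0 by rewrite /s big1 // => i _; rewrite pospnegpE P0 N0 subrr.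
    lra.
  by move=> i; have := P1 i; rewrite -[posp wf i]subr0 -(N0 i) -pospnegpE.
pose m := 2 * s - 1.
pose z := fun i => 2 * wf i / m.
have Hz : forall i, dotv (u i) (comb u z) = 1.
  move=> i.
  have -> : comb u z = (2 / m) *: X.
    rewrite /X /comb scaler_sumr; apply: eq_bigr => j _; rewrite scalerA.
    by rewrite /z mulrAC.
  by rewrite dotvZr mulrAC Hrow mulfV.
have z1 := minprin Hu1 Hob Hz.
have HT : n%:R <= \sum_(i < n) z i.
  have -> : (n%:R : R) = \sum_(i < n) 1 by rewrite sumr_const card_ord.
  by apply: ler_sum => i _; exact: z1.
have n2 : (2 : R) <= n%:R by rewrite (ler_nat R 2 n).
have HTm : (\sum_(i < n) z i) * m = 2 * s.
  rewrite mulr_suml /s mulr_sumr; apply: eq_bigr => i _; rewrite /z; field.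
  exact: mn0.
have mpos : 0 < m by rewrite /m in HTm *; nra.
move=> i; have : z i * m = 2 * wf i by rewrite /z; field; exact: mn0.
have := z1 i; rewrite -/(wf i); nra.
Qed.
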